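(* Let $m,n$ be integers with $0\le m\le n$. If $H\le G_n$ and $H$ has derived length $m$, then $H$ is isomorphic to a subgroup of $G_m$.
   Context: For a group $A$, $A\wr\mathbf{Z}=(\bigoplus_{i\in\mathbf{Z}}A)\rtimes\mathbf{Z}$ is the restricted wreath product with $\mathbf{Z}$ acting by index shift. $G_0$ is the trivial group and $G_n=\bigoplus_{i\in\mathbf{Z}}(G_{n-1}\wr\mathbf{Z})$ for $n\ge1$. *)

(* Defs.v *)
From Stdlib Require Import ZArith Lia ProofIrrelevance FunctionalExtensionality.
Open Scope Z_scope.

(* Only the two facts
   one*one = one and one^-1 = one are recorded (needed to build finitely
   supported functions); the group G_n below are genuine groups. *)
Record grp := Grp {
  car : Type;
  one : car;
  mul : car -> car -> car;
  inv : car -> car;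
  mul11 : mul one one = one;
  inv1 : inv one = one }.

Definition finsupp (A : grp) (f : Z -> car A) : Prop :=
  exists N : Z, forall i, N < Z.abs i -> f i = one A.

Definition FS (A : grp) := { f : Z -> car A | finsupp A f }.

Lemma finsupp_one A : finsupp A (fun _ => one A).
Proof. exists 0; auto. Qed.

Lemma finsupp_mul A f g : finsupp A f -> finsupp A g ->
  finsupp A (fun i => mul A (f i) (g i)).
Proof.
intros [N Hf] [M Hg]; exists (Z.max N M); intros i Hi.
rewrite Hf, Hg by lia; apply mul11.
Qed.

Lemma finsupp_inv A f : finsupp A f -> finsupp A (fun i => inv A (f i)).
Proof. intros [N Hf]; exists N; intros i Hi; rewrite Hf by lia; apply inv1. Qed.

Lemma finsupp_shift A k f : finsupp A f -> finsupp A (fun i => f (i - k)).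
Proof. intros [N Hf]; exists (N + Z.abs k); intros i Hi; apply Hf; lia. Qed.

Definition fs_one A : FS A := exist _ _ (finsupp_one A).
Definition fs_mul A (f g : FS A) : FS A :=
  exist _ _ (finsupp_mul A _ _ (proj2_sig f) (proj2_sig g)).
Definition fs_inv A (f : FS A) : FS A :=
  exist _ _ (finsupp_inv A _ (proj2_sig f)).
Definition fs_shift A (k : Z) (f : FS A) : FS A :=
  exist _ _ (finsupp_shift A k _ (proj2_sig f)).

Lemma FS_eq A (f g : FS A) : proj1_sig f = proj1_sig g -> f = g.
Proof. destruct f, g; simpl; intros ->; f_equal; apply proof_irrelevance. Qed.

Lemma fs_mul11 A : fs_mul A (fs_one A) (fs_one A) = fs_one A.
Proof. apply FS_eq; simpl; apply functional_extensionality; intros; apply mul11. Qed.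

Lemma fs_inv1 A : fs_inv A (fs_one A) = fs_one A.
Proof. apply FS_eq; simpl; apply functional_extensionality; intros; apply inv1. Qed.

Definition DS (A : grp) : grp :=
  Grp (FS A) (fs_one A) (fs_mul A) (fs_inv A) (fs_mul11 A) (fs_inv1 A).

Definition wr_one A : FS A * Z := (fs_one A, 0).
Definition wr_mul A (x y : FS A * Z) : FS A * Z :=
  (fs_mul A (fst x) (fs_shift A (snd x) (fst y)), snd x + snd y).
Definition wr_inv A (x : FS A * Z) : FS A * Z :=
  (fs_shift A (- snd x) (fs_inv A (fst x)), - snd x).

Lemma wr_mul11 A : wr_mul A (wr_one A) (wr_one A) = wr_one A.
Proof.
unfold wr_mul, wr_one; simpl; f_equal.
apply FS_eq; simpl; apply functional_extensionality; intros; apply mul11.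
Qed.

Lemma wr_inv1 A : wr_inv A (wr_one A) = wr_one A.
Proof.
unfold wr_inv, wr_one; simpl; f_equal.
apply FS_eq; simpl; apply functional_extensionality; intros; apply inv1.
Qed.

Definition Wreath (A : grp) : grp :=
  Grp (FS A * Z) (wr_one A) (wr_mul A) (wr_inv A) (wr_mul11 A) (wr_inv1 A).

Definition Triv : grp :=
  Grp unit tt (fun _ _ => tt) (fun _ => tt) eq_refl eq_refl.

Fixpoint Gr (n : nat) : grp :=
  match n with
  | O => Triv
  | S k => DS (Wreath (Gr k))
  end.

Definition is_subgroup (A : grp) (H : car A -> Prop) : Prop :=
  H (one A) /\ (forall x y, H x -> H y -> H (mul A x y)) /\
  (forall x, H x -> H (inv A x)).

Inductive gen (A : grp) (S : car A -> Prop) : car A -> Prop :=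
  | gen_in : forall x, S x -> gen A S x
  | gen_one : gen A S (one A)
  | gen_mul : forall x y, gen A S x -> gen A S y -> gen A S (mul A x y)
  | gen_inv : forall x, gen A S x -> gen A S (inv A x).

Definition commutator (A : grp) (x y : car A) : car A :=
  mul A (mul A (inv A x) (inv A y)) (mul A x y).

Fixpoint derived (A : grp) (k : nat) (H : car A -> Prop) : car A -> Prop :=
  match k with
  | O => H
  | S k' => gen A (fun z => exists a b, derived A k' H a /\ derived A k' H b /\
                                      z = commutator A a b)
  end.

Definition derived_length (A : grp) (H : car A -> Prop) (m : nat) : Prop :=
  (forall x, derived A m H x -> x = one A) /\
  (forall k, (k < m)%nat -> exists x, derived A k H x /\ x <> one A).

(* the group H is isomorphic to a subgroup of B: there is an injective
   homomorphism from H into B (its image is then a subgroup of B) *)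
Definition embeds_into (A : grp) (H : car A -> Prop) (B : grp) : Prop :=
  exists phi : car A -> car B,
    (forall x y, H x -> H y -> phi (mul A x y) = mul B (phi x) (phi y)) /\
    (forall x y, H x -> H y -> phi x = phi y -> x = y).

(* Main.v *)
Require Import Defs.
From Stdlib Require Import ZArith Lia ProofIrrelevance FunctionalExtensionality ClassicalEpsilon Classical.
Open Scope Z_scope.

Record IsGroup (A : grp) : Prop := {
  g_assoc : forall x y z, mul A x (mul A y z) = mul A (mul A x y) z;
  g_1l : forall x, mul A (one A) x = x;
  g_1r : forall x, mul A x (one A) = x;
  g_Vl : forall x, mul A (inv A x) x = one A;
  g_Vr : forall x, mul A x (inv A x) = one A }.

Lemma g_cancel_l A (G : IsGroup A) x y z : mul A x y = mul A x z -> y = z.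
Proof.
intros E. rewrite <- (g_1l A G y), <- (g_1l A G z), <- (g_Vl A G x).
rewrite <- !(g_assoc A G), E; reflexivity.
Qed.

Lemma g_inv_uniq A (G : IsGroup A) x y : mul A x y = one A -> y = inv A x.
Proof.
intros E. apply (g_cancel_l A G x). rewrite E, (g_Vr A G); reflexivity.
Qed.

Lemma g_inv_inv A (G : IsGroup A) x : inv A (inv A x) = x.
Proof. symmetry; apply g_inv_uniq; auto; apply (g_Vl A G). Qed.

Lemma g_inv_mul A (G : IsGroup A) x y : inv A (mul A x y) = mul A (inv A y) (inv A x).
Proof.
symmetry; apply g_inv_uniq; auto.
rewrite (g_assoc A G), <- (g_assoc A G x), (g_Vr A G), (g_1r A G), (g_Vr A G); reflexivity.
Qed.

Lemma g_inv_one A (G : IsGroup A) : inv A (one A) = one A.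
Proof. apply inv1. Qed.

Ltac fs_ext := apply FS_eq; simpl; apply functional_extensionality; intro.

Lemma Triv_group : IsGroup Triv.
Proof. split; intros; simpl; try destruct x; reflexivity. Qed.

Lemma DS_group A : IsGroup A -> IsGroup (DS A).
Proof.
intros G; split; intros; simpl; unfold fs_mul, fs_one, fs_inv; fs_ext.
- apply (g_assoc A G).
- apply (g_1l A G).
- apply (g_1r A G).
- apply (g_Vl A G).
- apply (g_Vr A G).
Qed.

Lemma Wreath_group A : IsGroup A -> IsGroup (Wreath A).
Proof.
intros G; split; intros; simpl; unfold wr_mul, wr_one, wr_inv; simpl.
- destruct x as [f1 s1], y as [f2 s2], z as [f3 s3]; simpl. f_equal. all: try lia.
  fs_ext. rewrite (g_assoc A G). replace (x - s1 - s2) with (x - (s1+s2)) by lia; reflexivity.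
- destruct x as [f s]; simpl. f_equal. fs_ext. rewrite Z.sub_0_r. apply (g_1l A G).
- destruct x as [f s]; simpl. f_equal; [|lia]. fs_ext. apply (g_1r A G).
- destruct x as [f s]; simpl. f_equal; [|lia]. fs_ext. apply (g_Vl A G).
- destruct x as [f s]; simpl. f_equal; [|lia]. fs_ext.
  replace (x - s - - s) with x by lia. apply (g_Vr A G).
Qed.

Lemma Gr_group n : IsGroup (Gr n).
Proof.
induction n; simpl. apply Triv_group. apply DS_group, Wreath_group, IHn.
Qed.
Definition hom_on (A B : grp) (phi : car A -> car B) (S : car A -> Prop) :=
  forall x y, S x -> S y -> phi (mul A x y) = mul B (phi x) (phi y).
Definition inj_on (A B : grp) (phi : car A -> car B) (S : car A -> Prop) :=
  forall x y, S x -> S y -> phi x = phi y -> x = y.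
Definition img (A B : grp) (phi : car A -> car B) (S : car A -> Prop) : car B -> Prop :=
  fun y => exists x, S x /\ y = phi x.
Definition trivial_set (A : grp) (S : car A -> Prop) := forall x, S x -> x = one A.

Lemma hom_one A B phi S : IsGroup B -> is_subgroup A S -> hom_on A B phi S ->
  phi (one A) = one B.
Proof.
intros GB [S1 _] Hh.
assert (E : phi (one A) = mul B (phi (one A)) (phi (one A))).
{ rewrite <- Hh by auto. rewrite mul11. reflexivity. }
apply (g_cancel_l B GB (phi (one A))). rewrite <- E, (g_1r B GB); reflexivity.
Qed.

Lemma hom_inv A B phi S : IsGroup A -> IsGroup B -> is_subgroup A S -> hom_on A B phi S ->
  forall x, S x -> phi (inv A x) = inv B (phi x).
Proof.
intros GA GB HS Hh x Sx. pose proof HS as [S1 [SM SI]].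
apply g_inv_uniq; auto. rewrite <- Hh by auto.
rewrite (g_Vr A GA). eapply hom_one; eauto.
Qed.

Lemma img_subgroup A B phi S : IsGroup A -> IsGroup B -> is_subgroup A S -> hom_on A B phi S ->
  is_subgroup B (img A B phi S).
Proof.
intros GA GB HS Hh. pose proof HS as [S1 [SM SI]].
split; [|split].
- exists (one A); split; auto. symmetry; eapply hom_one; eauto.
- intros ? ? [x [Sx ->]] [y [Sy ->]]. exists (mul A x y); split; auto. symmetry; apply Hh; auto.
- intros ? [x [Sx ->]]. exists (inv A x); split; auto. symmetry; eapply hom_inv; eauto.
Qed.

Lemma gen_sub A (T U : car A -> Prop) : is_subgroup A U -> (forall x, T x -> U x) ->
  forall x, gen A T x -> U x.
Proof.
intros [U1 [UM UI]] TU x Hx; induction Hx; auto.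
Qed.

Lemma gen_subgroup A T : is_subgroup A (gen A T).
Proof. split; [|split]; intros. apply gen_one. apply gen_mul; auto. apply gen_inv; auto. Qed.

Lemma derived_props A S : is_subgroup A S -> forall k,
  is_subgroup A (derived A k S) /\ (forall x, derived A k S x -> S x).
Proof.
intros HS k; induction k as [|k [IH1 IH2]]; simpl.
- split; auto.
- split. apply gen_subgroup.
  apply gen_sub; auto. intros z [a [b [Ha [Hb ->]]]].
  destruct HS as [S1 [SM SI]]. unfold commutator; auto.
Qed.

Lemma derived_mono A (S T : car A -> Prop) : (forall x, S x -> T x) ->
  forall k x, derived A k S x -> derived A k T x.
Proof.
intros ST k; induction k; simpl; auto.
intros x Hx. induction Hx.
- apply gen_in. destruct H as [a [b [Ha [Hb ->]]]]. exists a, b; auto.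
- apply gen_one.
- apply gen_mul; auto.
- apply gen_inv; auto.
Qed.

Lemma derived_shift A Q k : forall x, derived A k (derived A 1 Q) x -> derived A (Datatypes.S k) Q x.
Proof.
induction k; simpl; auto.
intros x Hx. induction Hx.
- apply gen_in. destruct H as [a [b [Ha [Hb ->]]]]. exists a, b; simpl in IHk; auto.
- apply gen_one.
- apply gen_mul; auto.
- apply gen_inv; auto.
Qed.

Lemma derived_img A B phi Q : IsGroup A -> IsGroup B -> is_subgroup A Q -> hom_on A B phi Q ->
  forall k y, derived B k (img A B phi Q) y -> img A B phi (derived A k Q) y.
Proof.
intros GA GB HS Hh k. pose proof HS as [S1 [SM SI]].
induction k; simpl; auto.
destruct (derived_props A Q HS k) as [[D1 [DM DI]] DS].
intros y Hy; induction Hy.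
- destruct H as [a [b [Ha [Hb ->]]]].
  destruct (IHk a Ha) as [a' [Ha' ->]]. destruct (IHk b Hb) as [b' [Hb' ->]].
  exists (commutator A a' b'). split.
  + apply gen_in. exists a', b'; auto.
  + unfold commutator. rewrite !Hh by auto. rewrite !(hom_inv A B phi Q) by auto. reflexivity.
- exists (one A). split. apply gen_one. symmetry; eapply hom_one; eauto.
- destruct IHHy1 as [x' [Hx' ->]], IHHy2 as [y' [Hy' ->]].
  exists (mul A x' y'). split. apply gen_mul; auto.
  apply (derived_props A Q HS (Datatypes.S k)) in Hx'. apply (derived_props A Q HS (Datatypes.S k)) in Hy'.
  rewrite Hh; auto.
- destruct IHHy as [x' [Hx' ->]]. exists (inv A x'). split. apply gen_inv; auto.
  apply (derived_props A Q HS (Datatypes.S k)) in Hx'. rewrite (hom_inv A B phi Q); auto.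
Qed.

Lemma img_trivial A B phi S k : IsGroup A -> IsGroup B -> is_subgroup A S -> hom_on A B phi S ->
  trivial_set A (derived A k S) -> trivial_set B (derived B k (img A B phi S)).
Proof.
intros GA GB HS Hh T y Hy.
destruct (derived_img A B phi S GA GB HS Hh k y Hy) as [x [Hx ->]].
rewrite (T x Hx). eapply hom_one; eauto.
Qed.

Lemma emb_comp A B C phi S : hom_on A B phi S -> inj_on A B phi S ->
  embeds_into B (img A B phi S) C -> embeds_into A S C.
Proof.
intros Hh Hi [psi [Ph Pi]]. exists (fun x => psi (phi x)). split.
- intros x y Sx Sy. rewrite Hh by auto. apply Ph; eexists; eauto.
- intros x y Sx Sy E. apply Hi; auto. apply Pi; auto; eexists; eauto.
Qed.

Lemma emb_sub A S T B : (forall x, S x -> T x) -> embeds_into A T B -> embeds_into A S B.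
Proof. intros ST [p [P1 P2]]; exists p; split; auto. Qed.

Lemma emb_trivial A S B : trivial_set A S -> embeds_into A S B.
Proof.
intros T. exists (fun _ => one B). split.
- intros; symmetry; apply mul11.
- intros x y Sx Sy _. rewrite (T x Sx), (T y Sy). reflexivity.
Qed.
Definition zz (i : Z) : Z := if Z_le_dec 0 i then 2 * i else - 2 * i - 1.
Definition cpair (a b : Z) : Z := (a + b) * (a + b + 1) + 2 * b.
Definition zpair (i j : Z) : Z := cpair (zz i) (zz j).

Lemma zz_nonneg i : 0 <= zz i.
Proof. unfold zz; destruct Z_le_dec; lia. Qed.
Lemma zz_bound i : zz i <= 2 * Z.abs i.
Proof. unfold zz; destruct Z_le_dec; lia. Qed.
Lemma zz_inj i j : zz i = zz j -> i = j.
Proof. unfold zz; destruct Z_le_dec, Z_le_dec; lia. Qed.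

Lemma cpair_inj a b a' b' : 0 <= a -> 0 <= b -> 0 <= a' -> 0 <= b' ->
  cpair a b = cpair a' b' -> a = a' /\ b = b'.
Proof.
unfold cpair; intros.
destruct (Z.lt_trichotomy (a+b) (a'+b')) as [Hl|[He|Hl]].
- exfalso. assert ((a+b+1)*(a+b+2) <= (a'+b')*(a'+b'+1)) by nia. nia.
- assert (b = b') by nia. lia.
- exfalso. assert ((a'+b'+1)*(a'+b'+2) <= (a+b)*(a+b+1)) by nia. nia.
Qed.

Lemma zpair_inj i j i' j' : zpair i j = zpair i' j' -> i = i' /\ j = j'.
Proof.
unfold zpair; intros E.
apply cpair_inj in E; try apply zz_nonneg. destruct E as [E1 E2].
split; apply zz_inj; auto.
Qed.

Lemma zpair_bound i j N M : 0 <= N -> 0 <= M -> Z.abs i <= N -> Z.abs j <= M ->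
  Z.abs (zpair i j) <= cpair (2*N) (2*M).
Proof.
intros. unfold zpair, cpair.
pose proof (zz_nonneg i). pose proof (zz_nonneg j). pose proof (zz_bound i). pose proof (zz_bound j).
assert (0 <= zz i + zz j <= 2*N + 2*M) by lia.
rewrite Z.abs_eq by nia. nia.
Qed.

Definition mkFS (A : grp) (g : Z -> car A) : FS A :=
  match excluded_middle_informative (finsupp A g) with
  | left p => exist _ g p
  | right _ => fs_one A
  end.

Lemma mkFS_val A g : finsupp A g -> proj1_sig (mkFS A g) = g.
Proof. intros p; unfold mkFS; destruct excluded_middle_informative; simpl; tauto. Qed.

Definition projset (X : grp) (H : car (DS X) -> Prop) (i : Z) : car X -> Prop :=
  img (DS X) X (fun h => proj1_sig h i) H.

Lemma proj_hom X H i : hom_on (DS X) X (fun h : car (DS X) => proj1_sig h i) H.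
Proof. intros x y _ _; reflexivity. Qed.

Lemma projset_subgroup X H i : IsGroup X -> is_subgroup (DS X) H -> is_subgroup X (projset X H i).
Proof. intros GX HS. apply img_subgroup; auto. apply DS_group; auto. apply proj_hom. Qed.

Lemma projset_trivial X H i k : IsGroup X -> is_subgroup (DS X) H ->
  trivial_set (DS X) (derived (DS X) k H) -> trivial_set X (derived X k (projset X H i)).
Proof. intros GX HS T. apply img_trivial; auto. apply DS_group; auto. apply proj_hom. Qed.

Lemma stepA_gen X Y (GX : IsGroup X) (GY : IsGroup Y) (H : car (DS X) -> Prop) :
  is_subgroup (DS X) H -> (forall i, embeds_into X (projset X H i) Y) ->
  embeds_into (DS X) H (DS Y).
Proof.
intros HS E.
set (phi := fun i => proj1_sig (constructive_indefinite_description _ (E i))).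
assert (Phi : forall i, hom_on X Y (phi i) (projset X H i) /\ inj_on X Y (phi i) (projset X H i)).
{ intros i. exact (proj2_sig (constructive_indefinite_description _ (E i))). }
assert (P1 : forall i, phi i (one X) = one Y).
{ intros i. apply (hom_one X Y (phi i) (projset X H i)); [exact GY | apply projset_subgroup; auto | apply Phi]. }
assert (Fs : forall h, H h -> finsupp Y (fun i => phi i (proj1_sig h i))).
{ intros h _. destruct (proj2_sig h) as [N HN]. exists N. intros i Hi.
  rewrite HN by auto. apply P1. }
assert (In : forall h i, H h -> projset X H i (proj1_sig h i)).
{ intros h i Hh. exists h; auto. }
exists (fun h => mkFS Y (fun i => phi i (proj1_sig h i))). split.
- intros x y Hx Hy. pose proof HS as [_ [HM _]].
  apply FS_eq. rewrite (mkFS_val _ _ (Fs _ (HM _ _ Hx Hy))). simpl.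
  rewrite (mkFS_val _ _ (Fs _ Hx)), (mkFS_val _ _ (Fs _ Hy)).
  apply functional_extensionality; intro i.
  apply (proj1 (Phi i)); auto.
- intros x y Hx Hy Exy. apply FS_eq. apply functional_extensionality; intro i.
  apply (f_equal (@proj1_sig _ _)) in Exy. rewrite (mkFS_val _ _ (Fs _ Hx)), (mkFS_val _ _ (Fs _ Hy)) in Exy.
  apply (f_equal (fun g => g i)) in Exy.
  apply (proj2 (Phi i)); auto.
Qed.

Lemma uniform_bound (P : Z -> Z -> Prop) : (forall i, exists M, forall j, M < Z.abs j -> P i j) ->
  forall N : nat, exists M, 0 <= M /\ forall i j, Z.abs i <= Z.of_nat N -> M < Z.abs j -> P i j.
Proof.
intros HP N; induction N as [|N [M [M0 HM]]].
- destruct (HP 0) as [M HM]. exists (Z.abs M); split; [lia|].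
  intros i j Hi Hj. assert (i = 0) by lia. subst. apply HM; lia.
- destruct (HP (Z.of_nat (S N))) as [M1 H1]. destruct (HP (- Z.of_nat (S N))) as [M2 H2].
  exists (Z.max M (Z.max (Z.abs M1) (Z.abs M2))). split; [lia|].
  intros i j Hi Hj.
  destruct (Z_le_dec (Z.abs i) (Z.of_nat N)). apply HM; lia.
  destruct (Z_le_dec 0 i).
  + replace i with (Z.of_nat (S N)) by lia. apply H1; lia.
  + replace i with (- Z.of_nat (S N)) by lia. apply H2; lia.
Qed.

Definition zunpair (k : Z) : option (Z * Z) :=
  match excluded_middle_informative (exists p : Z * Z, zpair (fst p) (snd p) = k) with
  | left e => Some (proj1_sig (constructive_indefinite_description _ e))
  | right _ => None
  end.

Lemma zunpair_pair i j : zunpair (zpair i j) = Some (i, j).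
Proof.
unfold zunpair. destruct excluded_middle_informative as [e|n].
- f_equal. destruct (constructive_indefinite_description _ e) as [[a b] Hp]; simpl in *.
  apply zpair_inj in Hp. destruct Hp; subst; auto.
- exfalso; apply n. exists (i, j); auto.
Qed.

Lemma zunpair_some k i j : zunpair k = Some (i, j) -> zpair i j = k.
Proof.
unfold zunpair. destruct excluded_middle_informative as [e|n]; [|discriminate].
destruct (constructive_indefinite_description _ e) as [[a b] Hp]; simpl in *.
intros E; inversion E; subst; auto.
Qed.

Definition flat_fun (W : grp) (F : car (DS (DS W))) : Z -> car W :=
  fun k => match zunpair k with
           | Some (i, j) => proj1_sig (proj1_sig F i) j
           | None => one W
           end.

Lemma flat_finsupp W F : finsupp W (flat_fun W F).
Proof.
destruct (proj2_sig F) as [N HN].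
destruct (uniform_bound (fun i j => proj1_sig (proj1_sig F i) j = one W)
   (fun i => proj2_sig (proj1_sig F i)) (Z.to_nat (Z.abs N))) as [M [M0 HM]].
exists (cpair (2 * Z.abs N) (2 * M)). intros k Hk. unfold flat_fun.
destruct (zunpair k) as [[i j]|] eqn:E; auto.
apply zunpair_some in E. subst k.
destruct (Z_le_dec (Z.abs i) (Z.abs N)).
- destruct (Z_le_dec (Z.abs j) M).
  + exfalso. pose proof (zpair_bound i j (Z.abs N) M ltac:(lia) M0 l l0). lia.
  + apply HM; lia.
- rewrite HN by lia. reflexivity.
Qed.

Lemma flatten W : embeds_into (DS (DS W)) (fun _ => True) (DS W).
Proof.
exists (fun F => exist _ (flat_fun W F) (flat_finsupp W F)). split.
- intros x y _ _. apply FS_eq; simpl. apply functional_extensionality; intro k.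
  unfold flat_fun. destruct (zunpair k) as [[i j]|]; simpl; auto.
  symmetry; apply mul11.
- intros x y _ _ E. apply (f_equal (@proj1_sig _ _)) in E; simpl in E.
  apply FS_eq; apply functional_extensionality; intro i.
  apply FS_eq; apply functional_extensionality; intro j.
  apply (f_equal (fun g => g (zpair i j))) in E. unfold flat_fun in E.
  rewrite zunpair_pair in E. exact E.
Qed.

Lemma stepA X m (GX : IsGroup X) (H : car (DS X) -> Prop) :
  is_subgroup (DS X) H -> (forall i, embeds_into X (projset X H i) (Gr (S m))) ->
  embeds_into (DS X) H (Gr (S m)).
Proof.
intros HS E.
destruct (stepA_gen X (Gr (S m)) GX (Gr_group _) H HS E) as [phi [Ph Pi]].
apply (emb_comp _ _ _ phi H Ph Pi). simpl.
eapply emb_sub; [|apply flatten]. simpl. auto.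
Qed.

Lemma base_map A (K : car (Wreath A) -> Prop) : (forall k, K k -> snd k = 0) ->
  hom_on (Wreath A) (DS A) (@fst (FS A) Z) K /\ inj_on (Wreath A) (DS A) (@fst (FS A) Z) K.
Proof.
intros H0; split.
- intros [f s] [g t] Hx Hy. apply H0 in Hx; simpl in Hx; subst s. simpl.
  unfold wr_mul; simpl. f_equal. fs_ext. rewrite Z.sub_0_r; reflexivity.
- intros [f s] [g t] Hx Hy E. apply H0 in Hx; apply H0 in Hy; simpl in *; subst; reflexivity.
Qed.

Lemma pure_shifts X (K : car (Wreath X) -> Prop) : is_subgroup (Wreath X) K ->
  K (fs_one X, 1) -> forall z, K (fs_one X, z).
Proof.
intros [K1 [KM KI]] H1.
assert (Hn : forall n : nat, K (fs_one X, Z.of_nat n)).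
{ induction n. exact K1.
  specialize (KM _ _ IHn H1). simpl in KM. unfold wr_mul in KM; simpl in KM.
  replace (Z.of_nat (S n)) with (Z.of_nat n + 1) by lia.
  replace (fs_one X) with (fs_mul X (fs_one X) (fs_shift X (Z.of_nat n) (fs_one X))). exact KM.
  fs_ext. apply mul11. }
intros z. destruct (Z_le_dec 0 z).
- replace z with (Z.of_nat (Z.to_nat z)) by lia. apply Hn.
- specialize (KI _ (Hn (Z.to_nat (- z)))). simpl in KI. unfold wr_inv in KI; simpl in KI.
  replace z with (- Z.of_nat (Z.to_nat (-z))) by lia.
  replace (fs_one X) with (fs_shift X (- Z.of_nat (Z.to_nat (- z))) (fs_inv X (fs_one X))). exact KI.
  fs_ext. apply inv1.
Qed.

Definition p0 X (k : car (Wreath X)) : car X := proj1_sig (fst k) 0.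
Definition Mset X (K : car (Wreath X) -> Prop) : car X -> Prop :=
  fun x => exists k, K k /\ snd k = 0 /\ x = p0 X k.

Lemma D1_base X K : forall x, derived (Wreath X) 1 K x -> snd x = 0.
Proof.
intros x Hx; simpl in Hx; induction Hx; simpl in *; unfold wr_mul, wr_inv in *; simpl in *; try lia.
destruct H as [a [b [_ [_ ->]]]]. destruct a, b. unfold commutator; simpl; unfold wr_mul, wr_inv; simpl. lia.
Qed.

Lemma p0_hom X S : (forall x, S x -> snd x = 0) -> hom_on (Wreath X) X (p0 X) S.
Proof.
intros H0 [f s] [g t] Hx _. apply H0 in Hx; simpl in Hx; subst s.
unfold p0; simpl. reflexivity.
Qed.

Lemma M_in X (GX : IsGroup X) K : is_subgroup (Wreath X) K -> K (fs_one X, 1) ->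
  forall k j, K k -> Mset X K (proj1_sig (fst k) j).
Proof.
intros HS H1 [h s] j Hk. pose proof (pure_shifts X K HS H1) as PS.
destruct HS as [K1 [KM KI]].
set (k1 := mul (Wreath X) (h, s) (fs_one X, - s)).
set (k2 := mul (Wreath X) (mul (Wreath X) (fs_one X, - j) k1) (fs_one X, j)).
exists k2. split; [|split].
- unfold k2, k1; auto.
- unfold k2, k1; simpl; unfold wr_mul; simpl. lia.
- unfold k2, k1, p0; simpl; unfold wr_mul; simpl.
  rewrite !(g_1l X GX), !(g_1r X GX). f_equal. lia.
Qed.

Lemma M_subgroup X (GX : IsGroup X) K : is_subgroup (Wreath X) K -> is_subgroup X (Mset X K).
Proof.
intros [K1 [KM KI]]. split; [|split].
- exists (one (Wreath X)). split; auto.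
- intros x y [[f s] [Hk [Hs ->]]] [[g t] [Hl [Ht ->]]]. simpl in Hs, Ht; subst.
  exists (mul (Wreath X) (f, 0) (g, 0)). split; auto.
- intros x [[f s] [Hk [Hs ->]]]. simpl in Hs; subst.
  exists (inv (Wreath X) (f, 0)). split; auto.
Qed.

Lemma M_sub X (GX : IsGroup X) K : is_subgroup (Wreath X) K -> K (fs_one X, 1) ->
  forall x, Mset X K x -> img (Wreath X) X (p0 X) (derived (Wreath X) 1 K) x.
Proof.
intros HS H1 x [[h s] [Hk [Hs ->]]]. simpl in Hs; subst s.
pose proof (pure_shifts X K HS H1) as PS. pose proof HS as [K1 [KM KI]].
destruct (proj2_sig h) as [N HN].
set (y := (fs_one X, Z.abs N + 1)).
exists (commutator (Wreath X) (inv (Wreath X) (h, 0)) y). split.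
- simpl. apply gen_in. exists (inv (Wreath X) (h, 0)), y. split; [|split]; auto. apply PS.
- unfold commutator, p0, y; simpl; unfold wr_mul, wr_inv; simpl.
  rewrite (HN (- - (Z.abs N + 1) - 0)) by lia. rewrite inv1, !(g_inv_inv X GX), !(g_1r X GX). reflexivity.
Qed.

Lemma M_trivial X (GX : IsGroup X) K m : is_subgroup (Wreath X) K -> K (fs_one X, 1) ->
  trivial_set (Wreath X) (derived (Wreath X) (S m) K) -> trivial_set X (derived X m (Mset X K)).
Proof.
intros HS H1 T x Hx.
apply (derived_mono X _ _ (M_sub X GX K HS H1)) in Hx.
assert (HD : is_subgroup (Wreath X) (derived (Wreath X) 1 K)) by apply (derived_props _ _ HS 1).
destruct (derived_img (Wreath X) X (p0 X) _ (Wreath_group X GX) GX HD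
           (p0_hom X _ (D1_base X K)) m x Hx) as [k [Hk ->]].
apply derived_shift in Hk. rewrite (T k Hk). reflexivity.
Qed.

Definition single (W : grp) (w : car W) : car (DS W) :=
  mkFS W (fun i => if Z.eq_dec i 0 then w else one W).

Lemma single_fs W w : finsupp W (fun i => if Z.eq_dec i 0 then w else one W).
Proof. exists 0; intros i Hi; destruct Z.eq_dec; [lia|reflexivity]. Qed.

Lemma single_emb W : embeds_into W (fun _ => True) (DS W).
Proof.
exists (single W). split.
- intros x y _ _. apply FS_eq. unfold single. simpl.
  rewrite !mkFS_val by apply single_fs. apply functional_extensionality; intro i.
  destruct Z.eq_dec; auto. symmetry; apply mul11.
- intros x y _ _ E. apply (f_equal (fun f => proj1_sig f 0)) in E. unfold single in E.
  rewrite !mkFS_val in E by apply single_fs. simpl in E. exact E.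
Qed.

Lemma stepC3 X (GX : IsGroup X) m K : is_subgroup (Wreath X) K -> K (fs_one X, 1) ->
  trivial_set (Wreath X) (derived (Wreath X) (S m) K) ->
  (forall M, is_subgroup X M -> trivial_set X (derived X m M) -> embeds_into X M (Gr m)) ->
  embeds_into (Wreath X) K (Gr (S m)).
Proof.
intros HS H1 T IH.
destruct (IH (Mset X K) (M_subgroup X GX K HS) (M_trivial X GX K m HS H1 T)) as [phi [Ph Pi]].
pose proof (M_in X GX K HS H1) as Min.
assert (P1 : phi (one X) = one (Gr m)).
{ apply (hom_one X (Gr m) phi (Mset X K)); auto. apply Gr_group. apply M_subgroup; auto. }
assert (Fs : forall k, K k -> finsupp (Gr m) (fun j => phi (proj1_sig (fst k) j))).
{ intros k Hk. destruct (proj2_sig (fst k)) as [N HN]. exists N; intros j Hj.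
  rewrite HN by auto. apply P1. }
set (psi := fun k : car (Wreath X) => (mkFS (Gr m) (fun j => phi (proj1_sig (fst k) j)), snd k)
             : car (Wreath (Gr m))).
apply (emb_comp _ _ _ psi K).
- intros x y Hx Hy. pose proof HS as [_ [KM _]].
  assert (V : forall k, K k -> proj1_sig (fst (psi k)) = fun j => phi (proj1_sig (fst k) j)).
  { intros k Hk. unfold psi; simpl. apply mkFS_val, Fs, Hk. }
  pose proof (V _ (KM _ _ Hx Hy)) as Vxy. pose proof (V _ Hx) as Vx. pose proof (V _ Hy) as Vy.
  destruct x as [f s], y as [g t].
  apply injective_projections.
  + apply FS_eq. rewrite Vxy. simpl. simpl in Vx, Vy. rewrite Vx, Vy.
    apply functional_extensionality; intro j.
    apply Ph. apply (Min (f, s)); auto. apply (Min (g, t)); auto.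
  + reflexivity.
- intros [f s] [g t] Hx Hy E. unfold psi in E. simpl in E. injection E as E1 E2. subst t.
  f_equal. apply (f_equal (@proj1_sig _ _)) in E1.
  pose proof (Fs _ Hx) as Fx; pose proof (Fs _ Hy) as Fy; simpl in Fx, Fy. rewrite (mkFS_val _ _ Fx), (mkFS_val _ _ Fy) in E1.
  apply FS_eq; apply functional_extensionality; intro j.
  apply (f_equal (fun f => f j)) in E1. simpl in E1.
  apply Pi; auto. apply (Min (f, s)); auto. apply (Min (g, s)); auto.
- simpl. eapply emb_sub; [|apply single_emb]. simpl. auto.

Qed.

Lemma g_cancel_r A (G : IsGroup A) x y z : mul A y x = mul A z x -> y = z.
Proof.
intros E. rewrite <- (g_1r A G y), <- (g_1r A G z), <- (g_Vr A G x).
rewrite !(g_assoc A G), E; reflexivity.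
Qed.

Lemma conj_split A (G : IsGroup A) a b c x y :
  mul A (mul A (inv A a) (mul A x y)) b =
  mul A (mul A (mul A (inv A a) x) c) (mul A (mul A (inv A c) y) b).
Proof.
rewrite <- !(g_assoc A G). f_equal. f_equal.
rewrite (g_assoc A G c), (g_Vr A G), (g_1l A G). reflexivity.
Qed.

Definition conjw A (c : Z -> car A) (k : car (Wreath A)) : car (Wreath A) :=
  (mkFS A (fun j => mul A (mul A (inv A (c j)) (proj1_sig (fst k) j)) (c (j - snd k))), snd k).

Lemma conjw_props A (GA : IsGroup A) c (K : car (Wreath A) -> Prop) :
  is_subgroup (Wreath A) K ->
  (forall k, K k -> exists N, forall j, N < Z.abs j -> c j = c (j - snd k)) ->
  hom_on (Wreath A) (Wreath A) (conjw A c) K /\ inj_on (Wreath A) (Wreath A) (conjw A c) K.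
Proof.
intros HS Hc.
assert (Fs : forall k, K k -> finsupp A (fun j => mul A (mul A (inv A (c j)) (proj1_sig (fst k) j)) (c (j - snd k)))).
{ intros k Hk. destruct (Hc k Hk) as [N1 H1]. destruct (proj2_sig (fst k)) as [N2 H2].
  exists (Z.max N1 N2). intros j Hj. rewrite H2 by lia. rewrite <- H1 by lia.
  rewrite (g_1r A GA), (g_Vl A GA). reflexivity. }
assert (V : forall k, K k -> proj1_sig (fst (conjw A c k)) =
   fun j => mul A (mul A (inv A (c j)) (proj1_sig (fst k) j)) (c (j - snd k))).
{ intros k Hk. unfold conjw; simpl. apply mkFS_val, Fs, Hk. }
split.
- intros x y Hx Hy. pose proof HS as [_ [KM _]].
  pose proof (V _ (KM _ _ Hx Hy)) as Vxy. pose proof (V _ Hx) as Vx. pose proof (V _ Hy) as Vy.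
  destruct x as [f s], y as [g t].
  apply injective_projections.
  + apply FS_eq. rewrite Vxy. simpl. simpl in Vx, Vy. rewrite Vx, Vy.
    apply functional_extensionality; intro j.
    rewrite (conj_split A GA _ _ (c (j - s))). do 2 f_equal. f_equal. lia.
  + reflexivity.
- intros x y Hx Hy E.
  pose proof (V _ Hx) as Vx. pose proof (V _ Hy) as Vy.
  destruct x as [f s], y as [g t]. simpl in Vx, Vy.
  unfold conjw in E. simpl in E. injection E as E1 E2. subst t.
  f_equal. apply (f_equal (@proj1_sig _ _)) in E1.
  unfold conjw in Vx, Vy; simpl in Vx, Vy. rewrite Vx, Vy in E1.
  apply FS_eq; apply functional_extensionality; intro j.
  apply (f_equal (fun f => f j)) in E1. simpl in E1.
  apply g_cancel_r in E1; auto. apply g_cancel_l in E1; auto.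
Qed.

Fixpoint prodN (A : grp) (f : Z -> car A) (d : Z) (j : Z) (L : nat) : car A :=
  match L with
  | O => one A
  | S L' => mul A (f j) (prodN A f d (j - d) L')
  end.

Definition cfun A f d N j := prodN A f d j (Z.to_nat (j + N + 1)).

Lemma prodN_stable A f d : forall L j, (forall l : nat, (L <= l)%nat -> f (j - Z.of_nat l * d) = one A) ->
  forall k, prodN A f d j (L + k) = prodN A f d j L.
Proof.
induction L; intros j Hj k; simpl.
- revert j Hj; induction k; intros j Hj; simpl; auto.
  rewrite IHk; [| intros l _; specialize (Hj (S l) (Nat.le_0_l _)); rewrite <- Hj; f_equal; lia].
  specialize (Hj 0%nat (Nat.le_0_l _)). replace (f j) with (one A) by (rewrite <- Hj; f_equal; lia).
  apply mul11.
- f_equal. apply IHL. intros l Hl. specialize (Hj (S l) ltac:(lia)). rewrite <- Hj. f_equal; lia.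
Qed.

Lemma cfun_rec A (GA : IsGroup A) f d N : 0 < d -> 0 <= N -> (forall j, N < Z.abs j -> f j = one A) ->
  forall j, cfun A f d N j = mul A (f j) (cfun A f d N (j - d)).
Proof.
intros Hd HN Hf j. unfold cfun.
destruct (Z_le_dec (j + N + 1) 0).
- replace (Z.to_nat (j + N + 1)) with 0%nat by lia.
  replace (Z.to_nat (j - d + N + 1)) with 0%nat by lia. simpl.
  rewrite Hf by lia. symmetry; apply mul11.
- replace (Z.to_nat (j + N + 1)) with (S (Z.to_nat (j + N))) by lia. simpl. f_equal.
  set (L0 := Z.to_nat (j - d + N + 1)).
  replace (Z.to_nat (j + N)) with (L0 + (Z.to_nat (j + N) - L0))%nat by lia.
  apply prodN_stable. intros l Hl. apply Hf. nia.
Qed.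

Lemma cfun_neg A f d N : forall j, j < - N -> cfun A f d N j = one A.
Proof. intros j Hj. unfold cfun. replace (Z.to_nat (j + N + 1)) with 0%nat by lia. reflexivity. Qed.

Lemma cfun_pos A (GA : IsGroup A) f d N : 0 < d -> 0 <= N -> (forall j, N < Z.abs j -> f j = one A) ->
  forall j, N < j -> cfun A f d N j = cfun A f d N (j - d).
Proof.
intros Hd HN Hf j Hj. rewrite (cfun_rec A GA f d N Hd HN Hf j). rewrite Hf by lia. apply (g_1l A GA).
Qed.

Lemma cfun_per A (GA : IsGroup A) f d N : 0 < d -> 0 <= N -> (forall j, N < Z.abs j -> f j = one A) ->
  forall n : nat, forall j, N + Z.of_nat n * d < j -> cfun A f d N j = cfun A f d N (j - Z.of_nat n * d).
Proof.
intros Hd HN Hf n; induction n; intros j Hj.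
- f_equal; lia.
- rewrite (cfun_pos A GA f d N Hd HN Hf j) by lia. rewrite IHn by lia. f_equal; lia.
Qed.

Lemma cfun_eventually A (GA : IsGroup A) f d N : 0 < d -> 0 <= N -> (forall j, N < Z.abs j -> f j = one A) ->
  forall q, exists M, forall j, M < Z.abs j -> cfun A f d N j = cfun A f d N (j - q * d).
Proof.
intros Hd HN Hf q. exists (N + Z.abs (q * d)). intros j Hj.
destruct (Z_lt_dec j 0).
- rewrite !cfun_neg by lia. reflexivity.
- destruct (Z_le_dec 0 q).
  + replace q with (Z.of_nat (Z.to_nat q)) at 1 by lia. apply cfun_per; auto. nia.
  + set (j' := j - q * d).
    replace j with (j' - Z.of_nat (Z.to_nat (- q)) * d) at 1 by lia.
    symmetry; apply cfun_per; auto. nia.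
Qed.

Definition inner (A : grp) (d : Z) (h : FS A) (q : Z) : Z -> car A :=
  fun r => if andb (0 <=? r) (r <? d) then proj1_sig h (q * d + r) else one A.

Lemma inner_fs A d h q : finsupp A (inner A d h q).
Proof.
exists (Z.abs d). intros r Hr. unfold inner.
destruct (0 <=? r) eqn:E1, (r <? d) eqn:E2; simpl; auto.
apply Z.leb_le in E1. apply Z.ltb_lt in E2. lia.
Qed.

Definition outer (A : grp) (d : Z) (h : FS A) : Z -> car (DS A) :=
  fun q => mkFS A (inner A d h q).

Lemma outer_fs A d h : 0 < d -> finsupp (DS A) (outer A d h).
Proof.
intros Hd. destruct (proj2_sig h) as [N HN]. exists (Z.abs N + 1). intros q Hq.
apply FS_eq. unfold outer. rewrite mkFS_val by apply inner_fs. simpl.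
apply functional_extensionality; intro r. unfold inner.
destruct (0 <=? r) eqn:E1, (r <? d) eqn:E2; simpl; auto.
apply Z.leb_le in E1. apply Z.ltb_lt in E2. apply HN. nia.
Qed.

Definition rg (A : grp) (d : Z) (k : car (Wreath A)) : car (Wreath (DS A)) :=
  (mkFS (DS A) (outer A d (fst k)), snd k / d).

Lemma rg_val A d k : 0 < d -> forall q r, proj1_sig (proj1_sig (fst (rg A d k)) q) r = inner A d (fst k) q r.
Proof.
intros Hd q r. unfold rg. cbn [fst]. rewrite mkFS_val by (apply outer_fs; auto).
unfold outer. rewrite mkFS_val by apply inner_fs. reflexivity.
Qed.

Lemma outer_val A d h q r : 0 < d ->
  proj1_sig (proj1_sig (mkFS (DS A) (outer A d h)) q) r = inner A d h q r.
Proof.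
intros Hd. rewrite mkFS_val by (apply outer_fs; auto).
unfold outer. rewrite mkFS_val by apply inner_fs. reflexivity.
Qed.

Lemma rg_props A d (K : car (Wreath A) -> Prop) : 0 < d ->
  (forall k, K k -> exists a, snd k = a * d) ->
  hom_on (Wreath A) (Wreath (DS A)) (rg A d) K /\ inj_on (Wreath A) (Wreath (DS A)) (rg A d) K.
Proof.
intros Hd Hdiv. split.
- intros [f s] [g t] Hx Hy. destruct (Hdiv _ Hx) as [a Ha]. destruct (Hdiv _ Hy) as [b Hb].
  simpl in Ha, Hb. subst s t.
  apply injective_projections.
  + apply FS_eq. apply functional_extensionality; intro q.
    apply FS_eq. apply functional_extensionality; intro r.
    etransitivity; [apply rg_val; auto|]. simpl.
    rewrite !outer_val by auto. rewrite Z.div_mul by lia.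
    unfold inner. simpl.
    destruct (0 <=? r), (r <? d); simpl; [| symmetry; apply mul11 ..].
    f_equal. f_equal. ring.
  + simpl. replace (a * d + b * d) with ((a + b) * d) by ring. rewrite !Z.div_mul by lia. reflexivity.
- intros [f s] [g t] Hx Hy E. destruct (Hdiv _ Hx) as [a Ha]. destruct (Hdiv _ Hy) as [b Hb].
  simpl in Ha, Hb. subst s t.
  pose proof (f_equal (@snd _ _) E) as Es. simpl in Es. rewrite !Z.div_mul in Es by lia. subst b.
  f_equal. apply FS_eq. apply functional_extensionality; intro j.
  pose proof (Z.div_mod j d ltac:(lia)) as Ej. pose proof (Z.mod_pos_bound j d Hd) as Bj.
  pose proof (f_equal (fun k => proj1_sig (proj1_sig (fst k) (j / d)) (j mod d)) E) as E'.
  simpl in E'. rewrite !outer_val in E' by auto. unfold inner in E'.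
  replace (0 <=? j mod d) with true in E' by (symmetry; apply Z.leb_le; lia).
  replace (j mod d <? d) with true in E' by (symmetry; apply Z.ltb_lt; lia).
  simpl in E'. replace j with (j / d * d + j mod d) by lia. exact E'.
Qed.

Lemma rg_shift A d : 0 < d -> rg A d (fs_one A, d) = (fs_one (DS A), 1).
Proof.
intros Hd. apply injective_projections.
- apply FS_eq. apply functional_extensionality; intro q.
  apply FS_eq. apply functional_extensionality; intro r.
  rewrite rg_val by auto. simpl. unfold inner. simpl. destruct (andb _ _); reflexivity.
- simpl. apply Z.div_same; lia.
Qed.

Lemma nat_min (P : nat -> Prop) n : P n -> exists n0, P n0 /\ forall n', P n' -> (n0 <= n')%nat.
Proof.
induction n as [n IH] using (well_founded_induction Wf_nat.lt_wf). intros Pn.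
destruct (classic (exists n', (n' < n)%nat /\ P n')) as [[n' [Hlt Pn']]|Hno].
- exact (IH n' Hlt Pn').
- exists n. split; auto. intros n' Pn'. destruct (Nat.le_gt_cases n n'); auto.
  exfalso; apply Hno; eauto.
Qed.

Lemma shift_elements A (K : car (Wreath A) -> Prop) t : is_subgroup (Wreath A) K -> K t ->
  forall k, K k -> forall q, exists k', K k' /\ snd k' = snd k - q * snd t.
Proof.
intros [K1 [KM KI]] Ht k Hk.
assert (Hn : forall n : nat, exists k', K k' /\ snd k' = snd k - Z.of_nat n * snd t).
{ induction n as [|n [k' [Hk' E]]].
  - exists k; split; auto. lia.
  - exists (mul (Wreath A) k' (inv (Wreath A) t)). split; auto.
    change (snd (mul (Wreath A) k' (inv (Wreath A) t))) with (snd k' + - snd t). lia. }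
assert (Hp : forall n : nat, exists k', K k' /\ snd k' = snd k + Z.of_nat n * snd t).
{ induction n as [|n [k' [Hk' E]]].
  - exists k; split; auto. lia.
  - exists (mul (Wreath A) k' t). split; auto.
    change (snd (mul (Wreath A) k' t)) with (snd k' + snd t). lia. }
intros q. destruct (Z_le_dec 0 q).
- destruct (Hn (Z.to_nat q)) as [k' [H1 H2]]. exists k'; split; auto. rewrite H2. f_equal. f_equal. lia.
- destruct (Hp (Z.to_nat (- q))) as [k' [H1 H2]]. exists k'; split; auto. rewrite H2.
  replace (Z.of_nat (Z.to_nat (- q))) with (- q) by lia. ring.
Qed.

Lemma stepC A (GA : IsGroup A) m (K : car (Wreath A) -> Prop) :
  is_subgroup (Wreath A) K -> trivial_set (Wreath A) (derived (Wreath A) (S m) K) ->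
  (forall M, is_subgroup A M -> trivial_set A (derived A (S m) M) -> embeds_into A M (Gr (S m))) ->
  (forall M, is_subgroup (DS A) M -> trivial_set (DS A) (derived (DS A) m M) -> embeds_into (DS A) M (Gr m)) ->
  embeds_into (Wreath A) K (Gr (S m)).
Proof.
intros HS T IHA IHX.
pose proof (Wreath_group A GA) as GW.
destruct (classic (forall k, K k -> snd k = 0)) as [H0|Hn].
- destruct (base_map A K H0) as [Hh Hi].
  apply (emb_comp (Wreath A) (DS A) _ (@fst (FS A) Z) K Hh Hi).
  assert (HS' : is_subgroup (DS A) (img (Wreath A) (DS A) fst K)).
  { apply img_subgroup; auto. apply DS_group; auto. }
  assert (T' : trivial_set (DS A) (derived (DS A) (S m) (img (Wreath A) (DS A) fst K))).
  { apply img_trivial; auto. apply DS_group; auto. }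
  apply stepA; auto. intros i. apply IHA.
  + apply projset_subgroup; auto.
  + apply projset_trivial; auto.
- assert (Hex : exists n : nat, exists k, K k /\ snd k = Z.of_nat (S n)).
  { apply not_all_ex_not in Hn. destruct Hn as [k Hk].
    apply imply_to_and in Hk. destruct Hk as [Hk Hs].
    pose proof HS as [_ [_ KI]].
    destruct (Z_le_dec 0 (snd k)).
    - exists (Z.to_nat (snd k - 1)), k. split; auto. lia.
    - exists (Z.to_nat (- snd k - 1)), (inv (Wreath A) k). split; auto.
      destruct k; simpl in *. lia. }
  destruct Hex as [n Pn]. destruct (nat_min (fun n => exists k, K k /\ snd k = Z.of_nat (S n)) n Pn) as [n0 [[t [Ht Htd]] Hmin]].
  set (d := Z.of_nat (S n0)) in *.
  assert (Hd : 0 < d) by (unfold d; lia).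
  assert (Hdiv : forall k, K k -> exists a, snd k = a * d).
  { intros k Hk. exists (snd k / d).
    destruct (shift_elements A K t HS Ht k Hk (snd k / d)) as [k' [Hk' E']].
    rewrite Htd in E'. fold d in E'.
    pose proof (Z.mod_pos_bound (snd k) d Hd). pose proof (Z.div_mod (snd k) d ltac:(lia)).
    destruct (Z.eq_dec (snd k mod d) 0) as [E0|E0]; [lia|].
    exfalso. assert (Hle := Hmin (Z.to_nat (snd k mod d - 1)) ltac:(exists k'; split; auto; lia)).
    unfold d in *. lia. }
  destruct t as [f0 d0]. simpl in Htd. fold d in Htd. subst d0.
  destruct (proj2_sig f0) as [N0 HN0].
  set (f := proj1_sig f0) in *.
  assert (Hf : forall j, Z.abs N0 < Z.abs j -> f j = one A) by (intros; apply HN0; lia).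
  set (c := cfun A f d (Z.abs N0)).
  assert (Hc : forall k, K k -> exists M, forall j, M < Z.abs j -> c j = c (j - snd k)).
  { intros k Hk. destruct (Hdiv k Hk) as [a Ha]. rewrite Ha.
    apply cfun_eventually; auto; lia. }
  destruct (conjw_props A GA c K HS Hc) as [Hh1 Hi1].
  apply (emb_comp _ _ _ (conjw A c) K Hh1 Hi1).
  set (K1 := img (Wreath A) (Wreath A) (conjw A c) K).
  assert (HS1 : is_subgroup (Wreath A) K1) by (apply img_subgroup; auto).
  assert (T1 : trivial_set (Wreath A) (derived (Wreath A) (S m) K1)) by (apply img_trivial; auto).
  assert (Hdiv1 : forall k, K1 k -> exists a, snd k = a * d).
  { intros k [x [Hx ->]]. simpl. apply Hdiv; auto. }
  assert (Ht1 : K1 (fs_one A, d)).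
  { exists (f0, d). split; auto. unfold conjw. cbn [fst snd].
    apply injective_projections; [|reflexivity]. cbn [fst].
    assert (E : (fun j => mul A (mul A (inv A (c j)) (proj1_sig f0 j)) (c (j - d))) = (fun _ => one A)).
    { apply functional_extensionality; intro j. fold f.
      rewrite <- (g_assoc A GA). unfold c. rewrite <- (cfun_rec A GA f d (Z.abs N0)); auto; try lia.
      apply (g_Vl A GA). }
    rewrite E. apply FS_eq. rewrite mkFS_val by apply finsupp_one. reflexivity. }
  destruct (rg_props A d K1 Hd Hdiv1) as [Hh2 Hi2].
  apply (emb_comp _ _ _ (rg A d) K1 Hh2 Hi2).
  apply stepC3.
  + apply DS_group; auto.
  + apply img_subgroup; auto. apply Wreath_group, DS_group; auto.
  + exists (fs_one A, d). split; auto. symmetry; apply rg_shift; auto.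
  + apply img_trivial; auto. apply Wreath_group, DS_group; auto.
  + exact IHX.
Qed.

Lemma main n : forall m H, is_subgroup (Gr n) H -> trivial_set (Gr n) (derived (Gr n) (S m) H) ->
  embeds_into (Gr n) H (Gr (S m)).
Proof.
induction n.
- intros m H _ _. apply emb_trivial. intros x _. destruct x; reflexivity.
- intros m H HS T. change (Gr (S n)) with (DS (Wreath (Gr n))) in *.
  pose proof (Gr_group n) as Gn.
  apply stepA; auto. apply Wreath_group; auto.
  intros i. apply stepC; auto.
  + apply projset_subgroup; auto. apply Wreath_group; auto.
  + apply projset_trivial; auto. apply Wreath_group; auto.
  + intros M HM TM. destruct m as [|m'].
    * apply emb_trivial. exact TM.
    * apply stepA; auto. intros j. apply IHn.
      -- apply projset_subgroup; auto.
      -- apply projset_trivial; auto.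
Qed.

Theorem lemma4 (m n : nat) (H : car (Gr n) -> Prop) :
  (m <= n)%nat -> is_subgroup (Gr n) H -> derived_length (Gr n) H m ->
  embeds_into (Gr n) H (Gr m).
Proof.
intros _ HS [Hd _]. destruct m as [|m].
- apply emb_trivial. exact Hd.
- apply main; auto.
Qed.
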